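(* Let $G$ be a graph and let $U$ be the set of vertices $u\in V(G)$ such that the connected component of $G$ containing $u$ is a complete graph. Then $\mu_\alpha(G)=\mu_\alpha(G-U)$.
   Context: All graphs are finite and simple; the null graph is allowed. For a graph $H$, $\alpha(H)$ is the maximum size of an independent set, $i(H)$ the minimum size of an inclusion-maximal independent set (both $0$ for the null graph), and $\mu_\alpha(H)=\alpha(H)-i(H)$. *)

(* Defs.v *)
(* A finite simple graph is a symmetric irreflexive relation
   e on a finType T.  Graph parameters are defined for the subgraph induced
   by a vertex set S : {set T}; the whole graph is S = [set: T]. *)
From mathcomp Require Import all_boot.
Set Implicit Arguments. Unset Strict Implicit. Unset Printing Implicit Defensive.

Section Defs.
Variables (T : finType) (e : rel T).

Definition stable (A : {set T}) : bool :=
  [forall x in A, forall y in A, ~~ e x y].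

Definition indep_in (S A : {set T}) : bool := (A \subset S) && stable A.

Definition maximal_indep_in (S A : {set T}) : bool :=
  indep_in S A &&
  [forall B : {set T}, (A \proper B) ==> ~~ indep_in S B].

Definition alpha_in (S : {set T}) : nat :=
  \max_(A : {set T} | indep_in S A) #|A|.

(* i(G[S]) : minimum size of a maximal independent set; the default #|S|
   is an upper bound on all such sizes, and a maximal independent set
   always exists (set0 when S is empty), so this is the true minimum. *)
Definition i_in (S : {set T}) : nat :=
  \big[minn/#|S|]_(A : {set T} | maximal_indep_in S A) #|A|.

Definition mu_alpha_in (S : {set T}) : nat := alpha_in S - i_in S.

Definition component (u : T) : {set T} := [set v | connect e u v].

Definition complete_component (u : T) : bool :=
  [forall v in component u, forall w in component u, (v != w) ==> e v w].

Definition Ucomp : {set T} := [set u | complete_component u].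

End Defs.

(* Main.v *)
Require Import Defs.
From mathcomp Require Import all_boot.

Section Aux.
Variables (T : finType) (e : rel T).
Hypotheses (e_sym : symmetric e) (e_irr : irreflexive e).

Lemma stableP (A : {set T}) :
  reflect (forall x y, x \in A -> y \in A -> ~~ e x y) (stable e A).
Proof.
apply: (iffP forall_inP) => [H x y xA yA|H x xA].
  by have /forall_inP := H x xA; apply.
by apply/forall_inP => y yA; apply: H.
Qed.

Lemma maximalP (S A : {set T}) :
  reflect (indep_in e S A /\ forall B : {set T}, A \proper B -> ~~ indep_in e S B)
          (maximal_indep_in e S A).
Proof.
apply: (iffP andP) => [[H1 /forallP H2]|[H1 H2]]; split => //.
  by move=> B AB; have /implyP := H2 B; apply.
by apply/forallP => B; apply/implyP; apply: H2.
Qed.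

Lemma stable_sub (A B : {set T}) : B \subset A -> stable e A -> stable e B.
Proof.
move=> /subsetP BA /stableP H; apply/stableP => x y xB yB.
by apply: H; apply: BA.
Qed.
Arguments stable_sub {A B}.

Lemma alpha_ub S A : indep_in e S A -> #|A| <= alpha_in e S.
Proof. by move=> H; rewrite /alpha_in; apply: (@leq_bigmax_cond _ _ (fun A : {set T} => #|A|) _ H). Qed.

Arguments alpha_ub {S A}.
Lemma alpha_ex S : exists2 A, indep_in e S A & #|A| = alpha_in e S.
Proof.
have H : 0 < #|[pred A : {set T} | indep_in e S A]|.
  apply/card_gt0P; exists set0; rewrite inE /indep_in sub0set /=.
  by apply/stableP => x y; rewrite inE.
have [A HA HE] := eq_bigmax_cond (fun A : {set T} => #|A|) H.
by exists A; [rewrite inE in HA|rewrite /alpha_in HE].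
Qed.

Lemma maximal_ex S : exists2 A, maximal_indep_in e S A & #|A| = alpha_in e S.
Proof.
have [A HA HE] := alpha_ex S; exists A => //; apply/maximalP; split => // B AB.
apply/negP => /alpha_ub; rewrite -HE; apply/negP; rewrite -ltnNge.
exact: proper_card.
Qed.

Lemma i_lb S A : maximal_indep_in e S A -> i_in e S <= #|A|.
Proof.
move=> H; rewrite /i_in.
elim: (index_enum _) (mem_index_enum A) => // x r IH; rewrite inE big_cons.
case/orP => [/eqP <-|Ar].
  by rewrite H geq_minl.
case: ifP => _; last exact: IH.
by rewrite geq_min IH // orbT.
Qed.

Arguments i_lb {S A}.
Lemma i_ex S : exists2 A, maximal_indep_in e S A & #|A| = i_in e S.
Proof.
suff [A HA HE] : exists2 A, maximal_indep_in e S A & #|A| <= i_in e S.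
  by exists A => //; apply/eqP; rewrite eqn_leq HE i_lb.
rewrite /i_in; apply: (big_ind (fun x => exists2 A, maximal_indep_in e S A & #|A| <= x)).
- have [A HA _] := maximal_ex S; exists A => //.
  by apply: subset_leq_card; case/maximalP: HA => /andP [].
- move=> x y [A HA Ax] [B HB By]; case: (leqP x y) => xy.
  + by exists A => //; rewrite (minn_idPl xy).
  + by exists B => //; rewrite (minn_idPr (ltnW xy)).
- by move=> A HA; exists A.
Qed.

Section Split.
Variable A : {set T}.
Hypothesis noedge : forall x y, x \in A -> y \notin A -> ~~ e x y.

Lemma stableU (B C : {set T}) : B \subset A -> C \subset ~: A ->
  stable e B -> stable e C -> stable e (B :|: C).
Proof.
move=> /subsetP BA /subsetP CA /stableP SB /stableP SC; apply/stableP => x y.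
rewrite !inE => /orP [xB|xC] /orP [yB|yC].
- exact: SB.
- by apply: noedge; [apply: BA| have := CA _ yC; rewrite inE].
- rewrite e_sym; apply: noedge; [exact: BA | have := CA _ xC; rewrite inE //].
- exact: SC.
Qed.

Lemma maximal_restr M : maximal_indep_in e setT M -> maximal_indep_in e A (M :&: A).
Proof.
case/maximalP => [/andP [_ SM] HM]; apply/maximalP; split.
  by rewrite /indep_in subsetIr /=; apply: stable_sub SM; apply: subsetIl.
move=> J /properP [sJ [y yJ yn]]; apply/negP => /andP [JA SJ].
have : indep_in e setT (J :|: (M :\: A)).
  rewrite /indep_in subsetT /=; apply: stableU => //.
    by rewrite setDE subsetIr.
  by apply: stable_sub SM; apply: subsetDl.
apply/negP; apply: HM; apply/properP; split.
  apply/subsetP => x xM; rewrite !inE; case xA: (x \in A).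
    by rewrite (subsetP sJ) //; rewrite inE xM xA.
  by rewrite xM orbT.
exists y; first by rewrite inE yJ.
by apply: contra yn => yM; rewrite inE yM (subsetP JA).
Qed.

Lemma maximalU M1 M2 : maximal_indep_in e A M1 -> maximal_indep_in e (~: A) M2 ->
  maximal_indep_in e setT (M1 :|: M2).
Proof.
case/maximalP => [/andP [M1A S1] H1] /maximalP [/andP [M2A S2] H2].
apply/maximalP; split; first by rewrite /indep_in subsetT /= stableU.
move=> J /properP [sJ [y yJ yn]]; apply/negP => /andP [_ SJ].
have E1 : M1 = J :&: A.
  have : M1 \subset J :&: A by rewrite subsetI M1A (subset_trans _ sJ) // subsetUl.
  rewrite subEproper => /orP [/eqP //|/H1]; rewrite /indep_in subsetIr /=.
  by rewrite (stable_sub _ SJ) // subsetIl.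
have E2 : M2 = J :&: ~: A.
  have : M2 \subset J :&: ~: A by rewrite subsetI M2A (subset_trans _ sJ) // subsetUr.
  rewrite subEproper => /orP [/eqP //|/H2]; rewrite /indep_in subsetIr /=.
  by rewrite (stable_sub _ SJ) // subsetIl.
by move: yn; rewrite E1 E2 -setDE setID yJ.
Qed.

Lemma noedgeC : forall x y, x \in ~: A -> y \notin ~: A -> ~~ e x y.
Proof. by move=> x y; rewrite !inE negbK => xA yA; rewrite e_sym noedge. Qed.

End Split.

Lemma indep_restr (A M : {set T}) : indep_in e setT M -> indep_in e A (M :&: A).
Proof.
case/andP => _ SM; rewrite /indep_in subsetIr /=.
by apply: stable_sub SM; apply: subsetIl.
Qed.

Lemma alpha_split (A : {set T}) : (forall x y, x \in A -> y \notin A -> ~~ e x y) ->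
  alpha_in e setT = alpha_in e A + alpha_in e (~: A).
Proof.
move=> ne; apply/eqP; rewrite eqn_leq; apply/andP; split.
  have [M HM <-] := alpha_ex setT.
  rewrite -(cardsID A M) setDE leq_add // alpha_ub // indep_restr //.
have [M1 /andP [M1A S1] <-] := alpha_ex A.
have [M2 /andP [M2A S2] <-] := alpha_ex (~: A).
have D : [disjoint M1 & M2].
  rewrite -setI_eq0; apply/eqP/setP => x; rewrite !inE.
  apply/negP => /andP [/(subsetP M1A) x1 /(subsetP M2A)]; by rewrite inE x1.
rewrite -cardsUI (_ : M1 :&: M2 = set0) ?cards0 ?addn0; last by apply/eqP; rewrite setI_eq0.
by apply: alpha_ub; rewrite /indep_in subsetT /= (@stableU A ne).
Qed.

Lemma i_split (A : {set T}) : (forall x y, x \in A -> y \notin A -> ~~ e x y) ->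
  i_in e setT = i_in e A + i_in e (~: A).
Proof.
move=> ne; apply/eqP; rewrite eqn_leq; apply/andP; split.
  have [M1 H1 <-] := i_ex A.
  have [M2 H2 <-] := i_ex (~: A).
  have H := @maximalU A ne M1 M2 H1 H2.
  case/maximalP: H1 => [/andP [M1A _] _]; case/maximalP: H2 => [/andP [M2A _] _].
  apply: leq_trans (i_lb H) _.
  by rewrite -cardsUI (_ : M1 :&: M2 = set0) ?cards0 ?addn0 //; apply/setP => x;
     rewrite !inE; apply/negP => /andP [/(subsetP M1A) x1 /(subsetP M2A)]; rewrite inE x1.
have [M HM <-] := i_ex setT.
rewrite -(cardsID A M) setDE leq_add // i_lb //.
  exact: maximal_restr.
by apply: maximal_restr => //; apply: noedgeC.
Qed.


Lemma csym : connect_sym e.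
Proof. exact: sym_connect_sym. Qed.

Lemma comp_edge x y : e x y -> component e x = component e y.
Proof.
move=> exy; apply/setP => v; rewrite !inE; apply/idP/idP => H.
  apply: connect_trans H; apply: connect1; by rewrite e_sym.
by apply: connect_trans H; apply: connect1.
Qed.

Lemma U_noedge : forall x y, x \in Ucomp e -> y \notin Ucomp e -> ~~ e x y.
Proof.
move=> x y xU yU; apply/negP => exy; move: yU; rewrite !inE /complete_component.
by rewrite -(comp_edge _ _ exy); rewrite inE /complete_component in xU; rewrite xU.
Qed.

Lemma complete_use x v w : x \in Ucomp e -> connect e x v -> connect e x w ->
  v != w -> e v w.
Proof.
rewrite inE => /forall_inP H xv xw vw.
have := H v; rewrite inE => /(_ xv) /forall_inP /(_ w); rewrite inE => /(_ xw).
by move/implyP; apply.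
Qed.

Lemma U_card I M : indep_in e (Ucomp e) I -> maximal_indep_in e (Ucomp e) M ->
  #|I| <= #|M|.
Proof.
case/andP => IU SI /maximalP [/andP [MU SM] HM].
pose f x := if [pick y in M | e x y] is Some y then y else x.
have Hf : forall x, x \in Ucomp e -> f x \in M /\ connect e x (f x).
  move=> x xU; rewrite /f; case: pickP => [y /andP [yM exy]|N].
    by split => //; apply: connect1.
  split => //; apply/negPn/negP => xM.
  have : indep_in e (Ucomp e) (x |: M).
    rewrite /indep_in subUset sub1set xU MU /=.
    apply/stableP => a b; rewrite !inE => /orP [/eqP ->|aM] /orP [/eqP ->|bM].
    - by rewrite e_irr.
    - by have := N b; rewrite bM /= => ->.
    - by rewrite e_sym; have := N a; rewrite aM /= => ->.
    - by move/stableP: SM; apply.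
  apply/negP; apply: HM; apply/properP; split; first exact: subsetUr.
  by exists x; rewrite ?inE ?eqxx.
have inj : {in I &, injective f}.
  move=> x1 x2 x1I x2I E; apply/eqP/negPn/negP => neq.
  have x1U := subsetP IU _ x1I; have x2U := subsetP IU _ x2I.
  have [_ c1] := Hf _ x1U; have [_ c2] := Hf _ x2U.
  rewrite E in c1.
  have c12 : connect e x1 x2 by apply: connect_trans c1 _; rewrite csym.
  have := complete_use _ _ _ x1U (connect0 _ _) c12 neq.
  by move/stableP: SI => /(_ x1 x2 x1I x2I) /negP.
rewrite -(card_in_imset inj); apply: subset_leq_card.
apply/subsetP => _ /imsetP [x xI ->]; exact: (Hf _ (subsetP IU _ xI)).1.
Qed.

Lemma alpha_i_U : alpha_in e (Ucomp e) = i_in e (Ucomp e).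
Proof.
have [A HA EA] := alpha_ex (Ucomp e).
have [M HM EM] := i_ex (Ucomp e).
have [A' HA' EA'] := maximal_ex (Ucomp e).
apply/eqP; rewrite eqn_leq -EA -EM U_card //=.
by rewrite EM EA -EA' i_lb.
Qed.

End Aux.


Theorem corollary3 (T : finType) (e : rel T)
    (e_sym : symmetric e) (e_irr : irreflexive e) :
  mu_alpha_in e [set: T] = mu_alpha_in e (~: Ucomp e).
Proof.
have H := @U_noedge T e e_sym.
rewrite /mu_alpha_in (@alpha_split T e e_sym _ H) (@i_split T e e_sym _ H).
by rewrite (@alpha_i_U T e e_sym e_irr) subnDl.
Qed.
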